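(* Let $\omega$ be a non-quasianalytic concave weight function and let $f:[0,\infty)\to[0,\infty)$ be any function with $\omega(t)=o(f(t))$ as $t\to\infty$. Then there exists a non-quasianalytic concave weight function $\tilde\omega$ such that $\omega(t)=o(\tilde\omega(t))$ and $\tilde\omega(t)=o(f(t))$ as $t\to\infty$.
   Context: A weight function is a continuous increasing $\omega:[0,\infty)\to[0,\infty)$ with $\omega(2t)=O(\omega(t))$, $\omega(t)=o(t)$, $\log t=o(\omega(t))$ as $t\to\infty$, and such that $t\mapsto\omega(e^t)$ is convex on $[0,\infty)$. It is non-quasianalytic if $\int_1^\infty\omega(t)t^{-2}\,dt<\infty$. *)

(* Defs.v *)
From Stdlib Require Import Reals.
From Coquelicot Require Import Coquelicot.
Open Scope R_scope.

Definition little_o_infty (g h : R -> R) : Prop :=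
  forall eps : R, 0 < eps ->
    exists M : R, forall t : R, M <= t -> Rabs (g t) <= eps * Rabs (h t).

Definition big_O_infty (g h : R -> R) : Prop :=
  exists C M : R, forall t : R, M <= t -> Rabs (g t) <= C * Rabs (h t).

Definition nonneg_half_line (x : R) : Prop := 0 <= x.

Definition convex_on_nonneg (g : R -> R) : Prop :=
  forall a b l : R, 0 <= a -> 0 <= b -> 0 <= l <= 1 ->
    g (l * a + (1 - l) * b) <= l * g a + (1 - l) * g b.

Definition concave_on_nonneg (g : R -> R) : Prop :=
  forall a b l : R, 0 <= a -> 0 <= b -> 0 <= l <= 1 ->
    l * g a + (1 - l) * g b <= g (l * a + (1 - l) * b).

(* A weight function omega : [0,oo) -> [0,oo) (values on negative reals are irrelevant). *)
Definition weight_function (w : R -> R) : Prop :=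
  (forall t, 0 <= t -> 0 <= w t) /\
  (forall x, 0 <= x ->
     filterlim w (within nonneg_half_line (locally x)) (locally (w x))) /\
  (forall s t, 0 <= s -> s <= t -> w s <= w t) /\
  big_O_infty (fun t => w (2 * t)) w /\
  little_o_infty w (fun t => t) /\
  little_o_infty ln w /\
  convex_on_nonneg (fun t => w (exp t)).

Definition non_quasianalytic (w : R -> R) : Prop :=
  ex_RInt_gen (fun t => w t / (t ^ 2)) (at_point 1) (Rbar_locally p_infty).

Definition concave_weight (w : R -> R) : Prop :=
  weight_function w /\ concave_on_nonneg w.

(* Main.v *)
Require Import Defs.
From Stdlib Require Import Reals.
From Coquelicot Require Import Coquelicot.
From Stdlib Require Import Lra Lia Psatz ClassicalEpsilon Classical.
Open Scope R_scope.

Lemma div_le_cross A B p q : 0 < p -> 0 < q -> A * q <= B * p -> A / p <= B / q.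
Proof.
  intros Hp Hq H.
  assert (E1 : A / p = (A * q) * / (p * q)) by (field; lra).
  assert (E2 : B / q = (B * p) * / (p * q)) by (field; lra).
  rewrite E1, E2. apply Rmult_le_compat_r; auto.
  apply Rlt_le, Rinv_0_lt_compat, Rmult_lt_0_compat; auto.
Qed.

Lemma slopes_convex (g : R -> R) :
  (forall x y z, 0 <= x -> x < y -> y < z ->
     (g y - g x) * (z - y) <= (g z - g y) * (y - x)) ->
  convex_on_nonneg g.
Proof.
  intros H a b l Ha Hb Hl.
  destruct (Req_dec l 0) as [H0|H0].
  { subst. replace (0 * a + (1 - 0) * b) with b by ring. lra. }
  destruct (Req_dec l 1) as [H1|H1].
  { subst. replace (1 * a + (1 - 1) * b) with a by ring. lra. }
  assert (Hl' : 0 < l < 1) by lra.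
  set (y := l * a + (1 - l) * b).
  destruct (Rtotal_order a b) as [Hab|[Hab|Hab]].
  - assert (E1 : y - a = (1 - l) * (b - a)) by (unfold y; ring).
    assert (E2 : b - y = l * (b - a)) by (unfold y; ring).
    assert (Hy1 : a < y) by (assert (0 < (1 - l) * (b - a)) by (apply Rmult_lt_0_compat; lra); lra).
    assert (Hy2 : y < b) by (assert (0 < l * (b - a)) by (apply Rmult_lt_0_compat; lra); lra).
    specialize (H a y b Ha Hy1 Hy2). rewrite E1, E2 in H.
    assert (K : (l * (g y - g a)) * (b - a) <= ((1 - l) * (g b - g y)) * (b - a)) by lra.
    apply Rmult_le_reg_r in K; lra.
  - subst. unfold y. replace (l * b + (1 - l) * b) with b by ring. lra.
  - assert (E1 : y - b = l * (a - b)) by (unfold y; ring).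
    assert (E2 : a - y = (1 - l) * (a - b)) by (unfold y; ring).
    assert (Hy1 : b < y) by (assert (0 < l * (a - b)) by (apply Rmult_lt_0_compat; lra); lra).
    assert (Hy2 : y < a) by (assert (0 < (1 - l) * (a - b)) by (apply Rmult_lt_0_compat; lra); lra).
    specialize (H b y a Hb Hy1 Hy2). rewrite E1, E2 in H.
    assert (K : ((1 - l) * (g y - g b)) * (a - b) <= (l * (g a - g y)) * (a - b)) by lra.
    apply Rmult_le_reg_r in K; lra.
Qed.

Lemma slopes_concave (g : R -> R) :
  (forall x y z, 0 <= x -> x < y -> y < z ->
     (g z - g y) * (y - x) <= (g y - g x) * (z - y)) ->
  concave_on_nonneg g.
Proof.
  intros H.
  assert (C : convex_on_nonneg (fun x => - g x)).
  { apply slopes_convex. intros x y z Hx Hxy Hyz. specialize (H x y z Hx Hxy Hyz). lra. }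
  intros a b l Ha Hb Hl. specialize (C a b l Ha Hb Hl). simpl in C. lra.
Qed.

Lemma concave_chord g : concave_on_nonneg g ->
  forall x y z, 0 <= x -> x < y -> y < z ->
     (g z - g y) * (y - x) <= (g y - g x) * (z - y).
Proof.
  intros H x y z Hx Hxy Hyz.
  set (l := (z - y) / (z - x)).
  assert (Hl : 0 <= l <= 1).
  { unfold l. split.
    - apply Rmult_le_pos; [lra| apply Rlt_le, Rinv_0_lt_compat; lra].
    - apply Rmult_le_reg_r with (z - x); [lra|]. unfold Rdiv.
      rewrite Rmult_assoc, Rinv_l; lra. }
  specialize (H x z l Hx (Rle_trans _ _ _ Hx (Rlt_le _ _ (Rlt_trans _ _ _ Hxy Hyz))) Hl).
  assert (Ey : l * x + (1 - l) * z = y) by (unfold l; field; lra).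
  rewrite Ey in H.
  assert (K : (l * g x + (1 - l) * g z) * (z - x) <= g y * (z - x)) by (apply Rmult_le_compat_r; lra).
  assert (E2 : (l * g x + (1 - l) * g z) * (z - x) = (z - y) * g x + (y - x) * g z) by (unfold l; field; lra).
  rewrite E2 in K. nra.
Qed.

Definition slope (g : R -> R) x y := (g y - g x) / (y - x).

Lemma concave_slope_mono g : concave_on_nonneg g ->
  forall a b a' b', 0 <= a -> a < b -> a' < b' -> a <= a' -> b <= b' ->
    slope g a' b' <= slope g a b.
Proof.
  intros H a b a' b' Ha Hab Hab' Haa Hbb.
  assert (S1 : slope g a b' <= slope g a b).
  { destruct (Req_dec b b') as [E|E]; [subst; lra|].
    unfold slope. apply div_le_cross; try lra.
    pose proof (concave_chord g H a b b' Ha Hab ltac:(lra)). nra. }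
  assert (S2 : slope g a' b' <= slope g a b').
  { destruct (Req_dec a a') as [E|E]; [subst; lra|].
    unfold slope. apply div_le_cross; try lra.
    pose proof (concave_chord g H a a' b' Ha ltac:(lra) ltac:(lra)). nra. }
  lra.
Qed.


Lemma cont_eps f x :
  (forall eps, 0 < eps -> exists d, 0 < d /\ forall y, Rabs (y - x) < d -> Rabs (f y - f x) < eps) ->
  continuity_pt f x.
Proof.
  intros H. unfold continuity_pt, continue_in, limit1_in, limit_in. intros eps He.
  destruct (H eps He) as [d [Hd H1]]. exists d. split; auto.
  intros y [_ Hy]. simpl in *. unfold R_dist in *. apply H1; auto.
Qed.

Lemma series_bound (a : nat -> R) n A c0 :
  (forall j, 0 <= a j) -> (forall j, (j < n)%nat -> a j <= A) ->
  (forall j, a (n + j)%nat <= c0 * (/2)^j) ->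
  ex_series a /\ Series a <= INR n * A + 2 * c0.
Proof.
  intros H0 H1 H2.
  assert (Hg : is_series (fun j => c0 * (/2)^j) (c0 * 2)).
  { apply is_series_ext with (fun j => (/2)^j * c0); [intros; simpl; ring|].
    replace (c0 * 2) with (/ (1 - /2) * c0) by field.
    apply is_series_scal_r. apply is_series_geom. rewrite Rabs_pos_eq; lra. }
  assert (Hs : ex_series (fun k => a (n + k)%nat)).
  { apply (@ex_series_le R_AbsRing R_CompleteNormedModule) with (b := fun j => c0 * (/2)^j).
    intros j. unfold norm; simpl. unfold abs; simpl. rewrite Rabs_pos_eq; auto.
    eexists; eauto. }
  assert (Hex : ex_series a) by (apply (ex_series_incr_n a n); auto).
  split; auto.
  assert (Hsb : Series (fun k => a (n + k)%nat) <= c0 * 2).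
  { rewrite <- (is_series_unique _ _ Hg). apply Series_le; [|eexists; eauto].
    intros j; split; auto. }
  destruct n as [|n].
  - simpl. rewrite (Series_ext a (fun k => a (0 + k)%nat)) by (intros; reflexivity). lra.
  - rewrite (Series_incr_n a (S n)) by (auto; lia). simpl Init.Nat.pred.
    assert (Hsum : forall m, (m <= n)%nat -> sum_f_R0 a m <= INR (S m) * A).
    { induction m; intros Hm.
      - simpl. rewrite Rmult_1_l. apply H1. lia.
      - simpl sum_f_R0. rewrite S_INR. specialize (IHm ltac:(lia)).
        assert (a (S m) <= A) by (apply H1; lia). lra. }
    specialize (Hsum n (le_n _)). lra.
Qed.

Lemma series_lower (a : nat -> R) n :
  (forall j, 0 <= a j) -> ex_series a -> sum_f_R0 a n <= Series a.
Proof.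
  intros H0 Hex.
  rewrite (Series_incr_n a (S n)) by (auto; lia). simpl Init.Nat.pred.
  assert (0 <= Series (fun k => a (S n + k)%nat)).
  { assert (Z : Series (fun _ => 0) = 0).
    { apply is_series_unique. unfold is_series.
      apply filterlim_ext with (fun _ => 0).
      intros m. rewrite sum_n_const. simpl. ring. apply filterlim_const. }
    rewrite <- Z.
    apply Series_le. intros; split; auto; lra.
    apply (ex_series_incr_n a (S n)); auto. }
  lra.
Qed.

Definition cseq (c : nat -> R) := (forall j, 0 < c j) /\ (forall j, c (S j) <= c j / 2) /\ c 0%nat <= 1.

Lemma c_geom c : cseq c -> forall n j, c (n + j)%nat <= c n * (/2)^j.
Proof.
  intros [H0 [H1 H2]] n j. induction j.
  - rewrite Nat.add_0_r. simpl. lra.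
  - rewrite Nat.add_succ_r. specialize (H1 (n + j)%nat). simpl. lra.
Qed.

Lemma c_dec c : cseq c -> forall j K, (j <= K)%nat -> c K <= c j.
Proof.
  intros [H0 [H1 H2]] j K H. induction H. lra.
  specialize (H1 m). specialize (H0 m). lra.
Qed.

Lemma c_small c : cseq c -> forall eps, 0 < eps -> exists n, c n < eps.
Proof.
  intros Hc eps He.
  destruct (pow_lt_1_zero (/2) ltac:(rewrite Rabs_pos_eq; lra) eps He) as [N HN].
  exists N. specialize (HN N (le_n _)). rewrite Rabs_pos_eq in HN by (apply pow_le; lra).
  pose proof (c_geom c Hc 0 N). simpl in H. destruct Hc as [H0 [H1 H2]].
  assert (0 <= (/2)^N) by (apply pow_le; lra). nra.
Qed.

Definition Gt (c : nat -> R) x j := Rmin (Rmax x 0) (c j).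
Definition G c x := Series (Gt c x).

Lemma Gt_bnd c x j : 0 < c j -> 0 <= Gt c x j <= c j.
Proof. intros H. unfold Gt, Rmin, Rmax. repeat destruct Rle_dec; lra. Qed.

Lemma G_ex c x : cseq c -> ex_series (Gt c x) /\ G c x <= 2 * c 0%nat.
Proof.
  intros Hc. destruct (series_bound (Gt c x) 0 0 (c 0%nat)) as [A B].
  - intros j. apply Gt_bnd, Hc.
  - intros; lia.
  - intros j. eapply Rle_trans. apply Gt_bnd, Hc. apply c_geom; auto.
  - split; auto. unfold G. simpl in B. lra.
Qed.

Lemma G_nonneg c x : cseq c -> 0 <= G c x.
Proof.
  intros Hc. destruct (series_lower (Gt c x) 0) as [A|A].
  - intros j; apply Gt_bnd, Hc.
  - apply G_ex; auto.
  - simpl in A. pose proof (Gt_bnd c x 0 (proj1 Hc 0%nat)). unfold G; lra.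
  - simpl in A. pose proof (Gt_bnd c x 0 (proj1 Hc 0%nat)). unfold G; lra.
Qed.

Lemma G_mono c x y : cseq c -> x <= y -> G c x <= G c y.
Proof.
  intros Hc Hxy. apply Series_le; [|apply G_ex; auto].
  intros j. pose proof (Gt_bnd c x j (proj1 Hc j)). split; [lra|].
  unfold Gt, Rmin, Rmax. repeat destruct Rle_dec; lra.
Qed.

Lemma G_upper c k x : cseq c -> 0 <= x -> G c x <= INR (S k) * x + 2 * c (S k).
Proof.
  intros Hc Hx. destruct (series_bound (Gt c x) (S k) x (c (S k))) as [A B].
  - intros j. apply Gt_bnd, Hc.
  - intros j _. unfold Gt, Rmin, Rmax. repeat destruct Rle_dec; lra.
  - intros j. eapply Rle_trans. apply Gt_bnd, Hc. apply c_geom; auto.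
  - exact B.
Qed.

Lemma G_lower c K x : cseq c -> 0 <= x <= c K -> INR (S K) * x <= G c x.
Proof.
  intros Hc Hx. eapply Rle_trans; [|apply series_lower; [intros j; apply Gt_bnd, Hc| apply G_ex; auto]].
  instantiate (1 := K).
  assert (forall m, (m <= K)%nat -> INR (S m) * x <= sum_f_R0 (Gt c x) m).
  { induction m; intros Hm.
    - simpl. unfold Gt. pose proof (c_dec c Hc 0 K ltac:(lia)).
      unfold Rmin, Rmax. repeat destruct Rle_dec; lra.
    - simpl sum_f_R0. rewrite S_INR. specialize (IHm ltac:(lia)).
      pose proof (c_dec c Hc (S m) K Hm).
      assert (Gt c x (S m) = x) by (unfold Gt, Rmin, Rmax; repeat destruct Rle_dec; lra).
      lra. }
  apply H; auto.
Qed.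

Lemma G_ratio c x y : cseq c -> 0 <= x -> x <= y -> x * G c y <= y * G c x.
Proof.
  intros Hc Hx Hxy. unfold G. rewrite <- !Series_scal_l.
  apply Series_le.
  - intros j. pose proof (proj1 Hc j). split.
    + pose proof (Gt_bnd c y j H). nra.
    + unfold Gt, Rmin, Rmax. repeat destruct Rle_dec; nra.
  - destruct (G_ex c x Hc) as [[l Hl] _]. exists (l * y).
    apply is_series_ext with (fun j => Gt c x j * y). intros; simpl; ring. apply is_series_scal_r; auto.
Qed.

Lemma G_cont c x : cseq c -> continuity_pt (G c) x.
Proof.
  intros Hc. apply cont_eps. intros eps He.
  destruct (c_small c Hc (eps / 4) ltac:(lra)) as [n Hn].
  exists (eps / (2 * (INR n + 1))). split.
  { apply Rdiv_lt_0_compat; [lra|]. pose proof (pos_INR n). lra. }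
  intros y Hy.
  destruct (G_ex c x Hc) as [Ex _]. destruct (G_ex c y Hc) as [Ey _].
  unfold G. rewrite <- Series_minus by auto.
  destruct (series_bound (fun j => Rabs (Gt c y j - Gt c x j)) n (Rabs (y - x)) (c n)) as [A B].
  - intros; apply Rabs_pos.
  - intros j _. unfold Gt, Rmin, Rmax. repeat destruct Rle_dec; unfold Rabs; repeat destruct Rcase_abs; lra.
  - intros j. eapply Rle_trans; [|apply c_geom; auto].
    pose proof (proj1 Hc (n + j)%nat).
    unfold Gt, Rmin, Rmax. repeat destruct Rle_dec; unfold Rabs; repeat destruct Rcase_abs; lra.
  - eapply Rle_lt_trans. apply Series_Rabs. exact A.
    assert (INR n * Rabs (y - x) <= INR n * (eps / (2 * (INR n + 1)))).
    { apply Rmult_le_compat_l. apply pos_INR. lra. }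
    assert (INR n * (eps / (2 * (INR n + 1))) <= eps / 2).
    { pose proof (pos_INR n).
      assert (E : INR n * (eps / (2 * (INR n + 1))) = eps/2 - eps/(2*(INR n+1))) by (field; lra).
      rewrite E. assert (0 < eps/(2*(INR n+1))) by (apply Rdiv_lt_0_compat; lra). lra. }
    lra.
Qed.

Lemma w_nonneg w : concave_weight w -> forall t, 0 <= t -> 0 <= w t.
Proof. intros [[H _] _]; auto. Qed.

Lemma w_mono w : concave_weight w -> forall s t, 0 <= s -> s <= t -> w s <= w t.
Proof. intros [[_ [_ [H _]]] _]; auto. Qed.

Lemma w_conc w : concave_weight w -> concave_on_nonneg w.
Proof. intros [_ H]; auto. Qed.

Lemma w_half w : concave_weight w -> forall t, 0 <= t -> w t / 2 <= w (t / 2).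
Proof.
  intros Hw t Ht. pose proof (w_conc w Hw 0 t (/2) (Rle_refl 0) Ht ltac:(lra)).
  replace (/ 2 * 0 + (1 - / 2) * t) with (t/2) in H by field.
  pose proof (w_nonneg w Hw 0 (Rle_refl 0)). lra.
Qed.

Lemma w_cont w : concave_weight w -> forall x, 0 < x -> continuity_pt w x.
Proof.
  intros [[_ [H _]] _] x Hx. apply continuity_pt_filterlim.
  intros P HP. specialize (H x (Rlt_le _ _ Hx) P HP).
  unfold filtermap, within in *.
  assert (L : locally x (fun y => 0 <= y)).
  { apply (locally_interval _ x 0 p_infty); simpl; auto. intros; lra. }
  generalize (filter_and _ _ H L). apply filter_imp. intros y [A B]. apply A. exact B.
Qed.

Definition Dt (w : R -> R) t := slope w (t / 2) t.

Lemma Dt_eq w t : 0 < t -> t * Dt w t = 2 * (w t - w (t / 2)).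
Proof. intros Ht. unfold Dt, slope. field. lra. Qed.

Lemma Dt_nonneg w : concave_weight w -> forall t, 0 < t -> 0 <= Dt w t.
Proof.
  intros Hw t Ht. unfold Dt, slope. apply Rmult_le_pos.
  pose proof (w_mono w Hw (t/2) t ltac:(lra) ltac:(lra)). lra.
  apply Rlt_le, Rinv_0_lt_compat. lra.
Qed.

Lemma Dt_dec w : concave_weight w -> forall t t', 0 < t -> t <= t' -> Dt w t' <= Dt w t.
Proof.
  intros Hw t t' Ht Htt. unfold Dt. apply concave_slope_mono; try lra. apply w_conc; auto.
Qed.

Lemma Dt_le w : concave_weight w -> forall t, 0 < t -> Dt w t <= 2 * w t / t.
Proof.
  intros Hw t Ht. unfold Dt, slope.
  pose proof (w_nonneg w Hw (t/2) ltac:(lra)).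
  replace (2 * w t / t) with (w t / (t - t/2)) by (field; lra).
  unfold Rdiv. apply Rmult_le_compat_r. apply Rlt_le, Rinv_0_lt_compat; lra. lra.
Qed.

Lemma tD_inc w : concave_weight w -> forall t t', 2 <= t -> t <= t' ->
  t * Dt w t <= t' * Dt w t'.
Proof.
  intros Hw t t' Ht Htt. rewrite !Dt_eq by lra.
  destruct Hw as [[_ [_ [_ [_ [_ [_ Hcv]]]]]] _].
  set (g := fun s => - w (exp s)).
  assert (Cg : concave_on_nonneg g).
  { intros a b l Ha Hb Hl. unfold g. specialize (Hcv a b l Ha Hb Hl). simpl in Hcv. lra. }
  assert (L2 : 0 < ln 2) by (pose proof ln_lt_2; lra).
  assert (E1 : ln t - ln (t/2) = ln 2) by (rewrite ln_div; lra).
  assert (E2 : ln t' - ln (t'/2) = ln 2) by (rewrite ln_div; lra).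
  assert (Ha : 0 <= ln (t/2)) by (rewrite <- ln_1; apply ln_le; lra).
  pose proof (concave_slope_mono g Cg (ln (t/2)) (ln t) (ln (t'/2)) (ln t') Ha
       ltac:(lra) ltac:(lra) ltac:(apply ln_le; lra) ltac:(apply ln_le; lra)) as S.
  unfold slope, g in S. rewrite E1, E2, !exp_ln in S by lra.
  unfold Rdiv in S. apply Rmult_le_compat_r with (r := ln 2) in S; [|lra].
  rewrite !Rmult_assoc, Rinv_l in S by lra. lra.
Qed.

Lemma half_cont x : continuity_pt (fun s => s / 2) x.
Proof.
  apply cont_eps. intros eps He. exists eps. split; auto. intros y Hy.
  replace (y/2 - x/2) with ((y - x)/2) by field. rewrite Rabs_div by lra.
  rewrite (Rabs_pos_eq 2) by lra. pose proof (Rabs_pos (y - x)). lra.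
Qed.

Lemma Dt_cont w : concave_weight w -> forall t, 0 < t -> continuity_pt (Dt w) t.
Proof.
  intros Hw t Ht.
  apply continuity_pt_ext with (div_fct (minus_fct w (comp w (fun s => s/2))) (minus_fct (fun s => s) (fun s => s/2))).
  { intros; unfold div_fct, minus_fct, comp, Dt, slope; reflexivity. }
  apply continuity_pt_div.
  - apply continuity_pt_minus. apply w_cont; auto.
    apply continuity_pt_comp. apply half_cont. apply w_cont; auto. lra.
  - apply continuity_pt_minus. apply continuity_pt_id. apply half_cont.
  - unfold minus_fct. lra.
Qed.

Lemma Dt_to0 w : concave_weight w -> forall eps, 0 < eps -> exists M, 2 <= M /\
  forall t, M <= t -> Dt w t <= eps.
Proof.
  intros Hw eps He. pose proof Hw as Hw'. destruct Hw' as [[H0 [_ [_ [_ [Ho _]]]]] Hc].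
  destruct (Ho (eps/2) ltac:(lra)) as [M HM].
  exists (Rmax M 2). split. apply Rmax_r. intros t Ht.
  assert (Ht2 : 2 <= t) by (pose proof (Rmax_r M 2); lra).
  assert (HtM : M <= t) by (pose proof (Rmax_l M 2); lra).
  specialize (HM t HtM). rewrite !Rabs_pos_eq in HM by (try apply H0; lra).
  eapply Rle_trans. apply Dt_le; auto. lra.
  apply Rmult_le_reg_r with t. lra. unfold Rdiv. rewrite Rmult_assoc, Rinv_l by lra. lra.
Qed.

Definition E c w u := G c (Dt w (Rmax u 2)).

Lemma E_nonneg c w u : cseq c -> 0 <= E c w u.
Proof. intros; apply G_nonneg; auto. Qed.

Lemma E_dec c w : concave_weight w -> cseq c -> forall u v, u <= v -> E c w v <= E c w u.
Proof.
  intros Hw Hc u v H. unfold E. apply G_mono; auto. apply Dt_dec; auto.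
  pose proof (Rmax_r u 2); lra. unfold Rmax; repeat destruct Rle_dec; lra.
Qed.

Lemma E_max c w : concave_weight w -> cseq c -> forall u, E c w u <= G c (Dt w 2).
Proof.
  intros Hw Hc u. unfold E. apply G_mono; auto. apply Dt_dec; auto. lra. apply Rmax_r.
Qed.

Lemma E_key c w : concave_weight w -> cseq c -> forall x y, 2 <= x -> x <= y ->
  x * G c (Dt w x) <= y * G c (Dt w y).
Proof.
  intros Hw Hc x y Hx Hxy.
  set (a := Dt w y). set (b := Dt w x).
  assert (Ha : 0 <= a) by (apply Dt_nonneg; auto; lra).
  assert (Hab : a <= b) by (apply Dt_dec; auto; lra).
  assert (Hxb : x * b <= y * a) by (apply tD_inc; auto).
  pose proof (G_ratio c a b Hc Ha Hab) as R.
  pose proof (G_nonneg c a Hc). pose proof (G_nonneg c b Hc).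
  destruct (Rle_lt_or_eq_dec 0 a Ha) as [Ha'|Z]; [|symmetry in Z].
  2:{ assert (Hb0 : b = 0).
    { rewrite Z in Hxb. assert (0 <= b) by (apply Dt_nonneg; auto; lra). nra. }
    rewrite Hb0, Z. apply Rmult_le_compat_r; [apply G_nonneg; auto| lra]. }
  - apply Rmult_le_reg_l with a; auto.
    assert (a * (x * G c b) <= x * (b * G c a)) by nra.
    assert (x * (b * G c a) <= (y * a) * G c a) by (rewrite <- Rmult_assoc; apply Rmult_le_compat_r; auto).
    lra.
Qed.

Lemma E_tinc c w : concave_weight w -> cseq c -> forall u v, 1 <= u -> u <= v ->
  u * E c w u <= v * E c w v.
Proof.
  intros Hw Hc u v Hu Huv. unfold E.
  pose proof (G_nonneg c (Dt w 2) Hc).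
  destruct (Rle_dec u 2) as [U|U].
  - replace (Rmax u 2) with 2 by (unfold Rmax; destruct Rle_dec; lra).
    destruct (Rle_dec v 2) as [V|V].
    + replace (Rmax v 2) with 2 by (unfold Rmax; destruct Rle_dec; lra).
      apply Rmult_le_compat_r; auto.
    + replace (Rmax v 2) with v by (unfold Rmax; destruct Rle_dec; lra).
      pose proof (E_key c w Hw Hc 2 v ltac:(lra) ltac:(lra)). nra.
  - replace (Rmax u 2) with u by (unfold Rmax; destruct Rle_dec; lra).
    replace (Rmax v 2) with v by (unfold Rmax; destruct Rle_dec; lra).
    apply E_key; auto; lra.
Qed.

Lemma Rmax2_cont x : continuity_pt (fun u => Rmax u 2) x.
Proof.
  apply cont_eps. intros eps He. exists eps. split; auto. intros y Hy.
  unfold Rmax in *. repeat destruct Rle_dec; unfold Rabs in *; repeat destruct Rcase_abs; lra.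
Qed.

Lemma E_cont c w : concave_weight w -> cseq c -> forall u, continuous (E c w) u.
Proof.
  intros Hw Hc u. apply continuity_pt_filterlim.
  apply continuity_pt_ext with (comp (G c) (comp (Dt w) (fun u => Rmax u 2))).
  { intros; reflexivity. }
  apply continuity_pt_comp. apply continuity_pt_comp. apply Rmax2_cont.
  apply Dt_cont; auto. unfold comp. pose proof (Rmax_r u 2); lra.
  apply G_cont; auto.
Qed.

Lemma E_ex c w : concave_weight w -> cseq c -> forall a b, ex_RInt (E c w) a b.
Proof. intros. apply (@ex_RInt_continuous R_CompleteNormedModule). intros; apply E_cont; auto. Qed.

Lemma RInt_upper f a b M : a <= b -> ex_RInt f a b -> (forall x, a < x < b -> f x <= M) ->
  RInt f a b <= (b - a) * M.
Proof.
  intros Hab Hex H.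
  eapply Rle_trans. apply RInt_le with (g := fun _ => M); auto. apply ex_RInt_const.
  rewrite RInt_const. unfold scal; simpl; unfold mult; simpl. lra.
Qed.

Lemma RInt_lower f a b M : a <= b -> ex_RInt f a b -> (forall x, a < x < b -> M <= f x) ->
  (b - a) * M <= RInt f a b.
Proof.
  intros Hab Hex H.
  eapply Rle_trans; [|apply RInt_le with (f := fun _ => M); auto]. 
  rewrite RInt_const. unfold scal; simpl; unfold mult; simpl. lra. apply ex_RInt_const.
Qed.

Lemma RInt_diff f a b : (forall x y, ex_RInt f x y) -> RInt f 0 b - RInt f 0 a = RInt f a b.
Proof.
  intros H. rewrite <- (RInt_Chasles f 0 a b) by auto. unfold plus; simpl. ring.
Qed.

Definition Fw c w (t : R) : R := RInt (E c w) 0 t.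

Lemma F_diff c w : concave_weight w -> cseq c -> forall a b, Fw c w b - Fw c w a = RInt (E c w) a b.
Proof. intros. apply RInt_diff. apply E_ex; auto. Qed.

Lemma F_inc c w : concave_weight w -> cseq c -> forall a b, a <= b -> 0 <= Fw c w b - Fw c w a.
Proof.
  intros Hw Hc a b H. rewrite F_diff by auto.
  eapply Rle_trans; [|apply RInt_lower with (M := 0); auto]. lra. apply E_ex; auto.
  intros; apply E_nonneg; auto.
Qed.

Lemma F0 c w : Fw c w 0 = 0.
Proof. unfold Fw. apply (@RInt_point R_CompleteNormedModule). Qed.

Lemma F_lip c w : concave_weight w -> cseq c -> forall a b, a <= b ->
  Fw c w b - Fw c w a <= (b - a) * G c (Dt w 2).
Proof.
  intros Hw Hc a b H. rewrite F_diff by auto. apply RInt_upper; auto. apply E_ex; auto.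
  intros; apply E_max; auto.
Qed.

Lemma F_concave c w : concave_weight w -> cseq c -> concave_on_nonneg (Fw c w).
Proof.
  intros Hw Hc. apply slopes_concave. intros x y z Hx Hxy Hyz.
  assert (A : Fw c w z - Fw c w y <= (z - y) * E c w y).
  { rewrite F_diff by auto. apply RInt_upper; try lra. apply E_ex; auto.
    intros; apply E_dec; auto; lra. }
  assert (B : (y - x) * E c w y <= Fw c w y - Fw c w x).
  { rewrite F_diff by auto. apply RInt_lower; try lra. apply E_ex; auto.
    intros; apply E_dec; auto; lra. }
  assert (0 < y - x) by lra. assert (0 < z - y) by lra.
  apply Rle_trans with ((z - y) * E c w y * (y - x)). apply Rmult_le_compat_r; lra.
  replace ((z - y) * E c w y * (y - x)) with ((y - x) * E c w y * (z - y)) by ring.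
  apply Rmult_le_compat_r; lra.
Qed.

Lemma inv_cont x : 0 < x -> continuous (fun u => / u) x.
Proof.
  intros Hx. apply continuity_pt_filterlim.
  apply continuity_pt_ext with (inv_fct (fun u => u)). intros; reflexivity.
  apply continuity_pt_inv. apply continuity_pt_id. lra.
Qed.

Lemma RInt_Kinv K a b : 0 < a -> a <= b ->
  ex_RInt (fun u => K / u) a b /\ RInt (fun u => K / u) a b = K * (ln b - ln a).
Proof.
  intros Ha Hab.
  assert (I : is_RInt (fun u => / u) a b (ln b - ln a)).
  { apply (is_RInt_derive ln (fun u => / u)).
    - intros x Hx. apply is_derive_ln. rewrite Rmin_left in Hx; lra.
    - intros x Hx. apply inv_cont. rewrite Rmin_left in Hx; lra. }
  assert (I2 : is_RInt (fun u => K / u) a b (K * (ln b - ln a))).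
  { apply is_RInt_ext with (fun u => scal K (/ u)). intros; reflexivity.
    apply (@is_RInt_scal R_NormedModule). exact I. }
  split. eexists; eauto. apply is_RInt_unique; auto.
Qed.

Lemma F_logconvex c w : concave_weight w -> cseq c -> convex_on_nonneg (fun s => Fw c w (exp s)).
Proof.
  intros Hw Hc. apply slopes_convex. intros x y z Hx Hxy Hyz.
  assert (e1 : 1 <= exp x) by (rewrite <- exp_0; destruct Hx as [Hx|Hx]; [apply Rlt_le, exp_increasing; auto| rewrite Hx; lra]).
  assert (e2 : exp x < exp y) by (apply exp_increasing; auto).
  assert (e3 : exp y < exp z) by (apply exp_increasing; auto).
  set (K := exp y * E c w (exp y)).
  assert (A : Fw c w (exp y) - Fw c w (exp x) <= K * (y - x)).
  { rewrite F_diff by auto. destruct (RInt_Kinv K (exp x) (exp y)) as [I1 I2]; try lra.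
    rewrite !ln_exp in I2. rewrite <- I2. apply RInt_le; auto; try lra. apply E_ex; auto.
    intros u Hu. unfold K. pose proof (E_tinc c w Hw Hc u (exp y) ltac:(lra) ltac:(lra)).
    apply Rmult_le_reg_l with u. lra. unfold Rdiv. rewrite (Rmult_comm (exp y * E c w (exp y))).
    rewrite <- Rmult_assoc, Rinv_r, Rmult_1_l by lra. lra. }
  assert (B : K * (z - y) <= Fw c w (exp z) - Fw c w (exp y)).
  { rewrite F_diff by auto. destruct (RInt_Kinv K (exp y) (exp z)) as [I1 I2]; try lra.
    rewrite !ln_exp in I2. rewrite <- I2. apply RInt_le; auto; try lra. apply E_ex; auto.
    intros u Hu. unfold K. pose proof (E_tinc c w Hw Hc (exp y) u ltac:(lra) ltac:(lra)).
    apply Rmult_le_reg_l with u. lra. unfold Rdiv. rewrite (Rmult_comm (exp y * E c w (exp y))).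
    rewrite <- Rmult_assoc, Rinv_r, Rmult_1_l by lra. lra. }
  assert (0 < y - x) by lra. assert (0 < z - y) by lra.
  apply Rle_trans with (K * (y - x) * (z - y)). apply Rmult_le_compat_r; lra.
  replace (K * (y - x) * (z - y)) with (K * (z - y) * (y - x)) by ring.
  apply Rmult_le_compat_r; lra.
Qed.

Definition h (w : R -> R) v := w v / v.

Lemma h_cont w : concave_weight w -> forall v, 0 < v -> continuous (h w) v.
Proof.
  intros Hw v Hv. apply continuity_pt_filterlim.
  apply continuity_pt_ext with (div_fct w (fun u => u)). intros; reflexivity.
  apply continuity_pt_div. apply w_cont; auto. apply continuity_pt_id. lra.
Qed.

Lemma h_ex w : concave_weight w -> forall a b, 0 < a -> 0 < b -> ex_RInt (h w) a b.
Proof.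
  intros Hw a b Ha Hb. apply (@ex_RInt_continuous R_CompleteNormedModule).
  intros z Hz. apply h_cont; auto. pose proof (Rmin_glb_lt a b 0). 
  unfold Rmin in *. destruct Rle_dec; lra.
Qed.

Lemma D_ex w : concave_weight w -> forall a b, 0 < a -> 0 < b -> ex_RInt (Dt w) a b.
Proof.
  intros Hw a b Ha Hb. apply (@ex_RInt_continuous R_CompleteNormedModule).
  intros z Hz. apply continuity_pt_filterlim. apply Dt_cont; auto.
  unfold Rmin in *. destruct Rle_dec; lra.
Qed.

Lemma RInt_minus_R f g a b : ex_RInt f a b -> ex_RInt g a b ->
  RInt (fun x => f x - g x) a b = RInt f a b - RInt g a b.
Proof. intros H1 H2. exact (RInt_minus f g a b H1 H2). Qed.

Lemma RInt_scal_R f a b k : ex_RInt f a b -> RInt (fun x => k * f x) a b = k * RInt f a b.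
Proof. intros H. exact (RInt_scal f a b k H). Qed.

Lemma intD w : concave_weight w -> forall t, 2 <= t ->
  RInt (Dt w) 2 t = 2 * (RInt (h w) (t/2) t - RInt (h w) 1 2).
Proof.
  intros Hw t Ht.
  assert (e1 : RInt (Dt w) 2 t = RInt (fun u => 2 * h w u - h w (u/2)) 2 t).
  { apply (@RInt_ext R_CompleteNormedModule). intros x Hx. rewrite Rmin_left in Hx by lra.
    unfold Dt, slope, h. simpl. field. lra. }
  assert (ex2 : ex_RInt (fun u => h w (u / 2)) 2 t).
  { apply (@ex_RInt_ext R_NormedModule) with (fun y => scal 2 (scal (/2) (h w (/2 * y + 0)))).
    intros x _. change (2 * (/2 * h w (/2 * x + 0)) = h w (x/2)).
    replace (/2 * x + 0) with (x/2) by field. field.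
    apply (@ex_RInt_scal R_NormedModule). apply (@ex_RInt_comp_lin R_NormedModule).
    apply h_ex; auto; lra. }
  assert (e2 : RInt (fun u => h w (u / 2)) 2 t = 2 * RInt (h w) 1 (t/2)).
  { pose proof (RInt_comp_lin (h w) (/2) 0 2 t ltac:(apply h_ex; auto; lra)) as C.
    replace (/ 2 * 2 + 0) with 1 in C by field. replace (/ 2 * t + 0) with (t/2) in C by field.
    rewrite <- C.
    rewrite (@RInt_ext R_CompleteNormedModule (fun y => scal (/ 2) (h w (/ 2 * y + 0))) (fun y => /2 * h w (y/2))).
    rewrite RInt_scal_R by auto. rewrite <- Rmult_assoc, Rinv_r, Rmult_1_l by lra. reflexivity.
    intros x _. change (/2 * h w (/2 * x + 0) = /2 * h w (x/2)).
    replace (/2 * x + 0) with (x/2) by field. reflexivity. }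
  assert (ex3 : ex_RInt (h w) 2 t) by (apply h_ex; auto; lra).
  assert (ex4 : ex_RInt (fun u => 2 * h w u) 2 t) by exact (ex_RInt_scal (h w) 2 t 2 ex3).
  rewrite e1, RInt_minus_R, RInt_scal_R, e2 by auto.
  assert (C1 := RInt_Chasles (h w) 1 2 t ltac:(apply h_ex; auto; lra) ltac:(apply h_ex; auto; lra)).
  assert (C2 := RInt_Chasles (h w) 1 (t/2) t ltac:(apply h_ex; auto; lra) ltac:(apply h_ex; auto; lra)).
  unfold plus in C1, C2; simpl in C1, C2. lra.
Qed.

Lemma intD_upper w : concave_weight w -> forall t, 2 <= t -> RInt (Dt w) 2 t <= 2 * w t.
Proof.
  intros Hw t Ht. rewrite intD by auto.
  assert (U : RInt (h w) (t/2) t <= (t - t/2) * (w t / (t/2))).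
  { apply RInt_upper; try lra. apply h_ex; auto; lra. intros v Hv. unfold h.
    pose proof (w_mono w Hw v t ltac:(lra) ltac:(lra)). pose proof (w_nonneg w Hw v ltac:(lra)).
    unfold Rdiv. apply Rmult_le_compat; try lra. apply Rlt_le, Rinv_0_lt_compat; lra.
    apply Rinv_le_contravar; lra. }
  assert (L : (2 - 1) * 0 <= RInt (h w) 1 2).
  { apply RInt_lower; try lra. apply h_ex; auto; lra. intros v Hv. unfold h.
    apply Rmult_le_pos. apply w_nonneg; auto; lra. apply Rlt_le, Rinv_0_lt_compat; lra. }
  replace ((t - t/2) * (w t / (t/2))) with (w t) in U by (field; lra). lra.
Qed.

Lemma intD_lower w : concave_weight w -> forall t, 2 <= t -> w t / 2 - 2 * w 2 <= RInt (Dt w) 2 t.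
Proof.
  intros Hw t Ht. rewrite intD by auto.
  assert (L : (t - t/2) * (w (t/2) / t) <= RInt (h w) (t/2) t).
  { apply RInt_lower; try lra. apply h_ex; auto; lra. intros v Hv. unfold h.
    pose proof (w_mono w Hw (t/2) v ltac:(lra) ltac:(lra)). pose proof (w_nonneg w Hw (t/2) ltac:(lra)).
    unfold Rdiv. apply Rmult_le_compat; try lra. apply Rlt_le, Rinv_0_lt_compat; lra.
    apply Rinv_le_contravar; lra. }
  assert (U : RInt (h w) 1 2 <= (2 - 1) * w 2).
  { apply RInt_upper; try lra. apply h_ex; auto; lra. intros v Hv. unfold h.
    pose proof (w_mono w Hw v 2 ltac:(lra) ltac:(lra)). pose proof (w_nonneg w Hw v ltac:(lra)).
    apply Rmult_le_reg_r with v. lra. unfold Rdiv. rewrite Rmult_assoc, Rinv_l by lra. nra. }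
  replace ((t - t/2) * (w (t/2) / t)) with (w (t/2) / 2) in L by (field; lra).
  pose proof (w_half w Hw t ltac:(lra)). lra.
Qed.

Lemma ball_R (l e y : R) : ball l e y -> Rabs (y - l) < e.
Proof. intros H. exact H. Qed.

Lemma ball_R' (l e y : R) : Rabs (y - l) < e -> ball l e y.
Proof. intros H. exact H. Qed.

Lemma w_big w : concave_weight w -> forall M, exists a, forall t, a <= t -> M <= w t.
Proof.
  intros Hw M. pose proof Hw as [[H0 [_ [_ [_ [_ [Hln _]]]]]] _].
  destruct (Hln 1 ltac:(lra)) as [M1 HM1].
  exists (Rmax M1 (Rmax (exp M) 1)). intros t Ht.
  pose proof (Rmax_l M1 (Rmax (exp M) 1)). pose proof (Rmax_r M1 (Rmax (exp M) 1)).
  pose proof (Rmax_l (exp M) 1). pose proof (Rmax_r (exp M) 1).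
  specialize (HM1 t ltac:(lra)). rewrite Rmult_1_l, (Rabs_pos_eq (w t)) in HM1 by (apply H0; lra).
  assert (M <= ln t) by (rewrite <- (ln_exp M); apply ln_le; [apply exp_pos|lra]).
  pose proof (Rle_abs (ln t)). lra.
Qed.

Lemma tail_small w : non_quasianalytic w -> forall eps, 0 < eps ->
  exists a, 1 <= a /\ forall x y, a <= x -> x <= y -> RInt (fun t => w t / t ^ 2) x y <= eps.
Proof.
  intros [l Hl] eps He.
  assert (HB := Hl (ball l (mkposreal _ (Rdiv_lt_0_compat eps 2 He ltac:(lra)))) (locally_ball _ _)).
  unfold filtermapi in HB. destruct HB as [Q Rr HQ HR HP].
  unfold at_point in HQ. destruct HR as [M HM].
  exists (Rmax (M + 1) 1). split. apply Rmax_r. intros x y Hx Hxy.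
  pose proof (Rmax_l (M + 1) 1). pose proof (Rmax_r (M + 1) 1).
  destruct (HP 1 x HQ ltac:(apply HM; lra)) as [yx [Ix Bx]].
  destruct (HP 1 y HQ ltac:(apply HM; lra)) as [yy [Iy By]].
  cbn [fst snd] in Ix, Iy. apply ball_R in Bx. apply ball_R in By. simpl in Bx, By.
  assert (ex1 : ex_RInt (fun t => w t / t ^ 2) 1 y) by (eexists; eauto).
  assert (ex2 : ex_RInt (fun t => w t / t ^ 2) 1 x) by (eexists; eauto).
  assert (ex3 : ex_RInt (fun t => w t / t ^ 2) x y) by (apply (@ex_RInt_Chasles_2 R_CompleteNormedModule) with 1; [lra|auto]).
  pose proof (RInt_Chasles _ 1 x y ex2 ex3) as C.
  rewrite (is_RInt_unique _ _ _ _ Ix), (is_RInt_unique _ _ _ _ Iy) in C.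
  change (yx + RInt (fun t => w t / t ^ 2) x y = yy) in C.
  unfold Rabs in Bx, By. destruct (Rcase_abs (yx - l)); destruct (Rcase_abs (yy - l)); lra.
Qed.

Definition PA (w f : R -> R) (k : nat) (a : R) :=
  2 <= a /\ (forall t, a <= t -> 1 <= w t) /\
  (forall t, a <= t -> INR (S k) * INR (S k) * w t <= f t) /\
  (forall x y, a <= x -> x <= y -> RInt (fun t => w t / t ^ 2) x y <= (/2) ^ k / INR (S k)).

Lemma PA_ex w f : concave_weight w -> non_quasianalytic w -> little_o_infty w f ->
  (forall t, 0 <= t -> 0 <= f t) -> forall k, exists a, PA w f k a.
Proof.
  intros Hw Hnq Hwf Hf k.
  assert (Hk : 0 < INR (S k)) by (apply lt_0_INR; lia).
  destruct (w_big w Hw 1) as [a1 H1].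
  destruct (Hwf (/ (INR (S k) * INR (S k)))) as [a2 H2].
  { apply Rinv_0_lt_compat. nra. }
  destruct (tail_small w Hnq ((/2) ^ k / INR (S k))) as [a3 [_ H3]].
  { apply Rdiv_lt_0_compat; auto. apply pow_lt; lra. }
  set (a := Rmax 2 (Rmax a1 (Rmax a2 a3))).
  assert (A1 : 2 <= a) by apply Rmax_l.
  assert (A2 : a1 <= a /\ a2 <= a /\ a3 <= a).
  { unfold a. pose proof (Rmax_r 2 (Rmax a1 (Rmax a2 a3))). pose proof (Rmax_l a1 (Rmax a2 a3)).
    pose proof (Rmax_r a1 (Rmax a2 a3)). pose proof (Rmax_l a2 a3). pose proof (Rmax_r a2 a3). lra. }
  exists a. split; [auto|]. split; [|split].
  - intros t Ht. apply H1. lra.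
  - intros t Ht. specialize (H2 t ltac:(lra)).
    rewrite (Rabs_pos_eq (w t)), (Rabs_pos_eq (f t)) in H2 by (try apply Hf; try apply w_nonneg; auto; lra).
    apply Rmult_le_compat_l with (r := INR (S k) * INR (S k)) in H2; [|nra].
    rewrite <- Rmult_assoc, Rinv_r, Rmult_1_l in H2 by nra. lra.
  - intros x y Hx Hxy. apply H3; lra.
Qed.

Fixpoint Tseq (A : nat -> R) (n : nat) : R :=
  match n with O => A O | S m => Rmax (2 * Tseq A m) (A (S m)) end.

Lemma Tseq_A A n : A n <= Tseq A n.
Proof. destruct n; simpl. lra. apply Rmax_r. Qed.

Lemma Tseq_2 A : (forall n, 2 <= A n) -> forall n, 2 <= Tseq A n.
Proof. intros H n. pose proof (Tseq_A A n). specialize (H n). lra. Qed.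

Lemma Tseq_S A n : 2 * Tseq A n <= Tseq A (S n).
Proof. simpl. apply Rmax_l. Qed.

Lemma Tseq_mono A : (forall n, 2 <= A n) -> forall j k, (j <= k)%nat -> Tseq A j <= Tseq A k.
Proof.
  intros H j k Hjk. induction Hjk. lra.
  pose proof (Tseq_S A m). pose proof (Tseq_2 A H m). lra.
Qed.

Lemma Tseq_unb A : (forall n, 2 <= A n) -> forall t, exists n, t <= Tseq A n.
Proof.
  intros H t.
  assert (B : forall n, INR n <= Tseq A n).
  { induction n. simpl. specialize (H 0%nat). simpl; lra.
    rewrite S_INR. pose proof (Tseq_S A n). pose proof (Tseq_2 A H n). lra. }
  destruct (INR_unbounded t) as [n Hn]. exists n. specialize (B n). lra.
Qed.

Lemma Tseq_block A : (forall n, 2 <= A n) -> forall K t, Tseq A K <= t ->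
  exists k, (K <= k)%nat /\ Tseq A k <= t <= Tseq A (S k).
Proof.
  intros H K t Ht. destruct (Tseq_unb A H t) as [N HN].
  assert (G : forall n, t <= Tseq A (K + n) -> exists k, (K <= k)%nat /\ Tseq A k <= t <= Tseq A (S k)).
  { induction n; intros Hn.
    - exists K. split; auto. rewrite Nat.add_0_r in Hn. split; auto.
      pose proof (Tseq_S A K). pose proof (Tseq_2 A H K). lra.
    - destruct (Rle_dec t (Tseq A (K + n))) as [L|L].
      + apply IHn; auto.
      + exists (K + n)%nat. split. lia. split. lra. rewrite Nat.add_succ_r in Hn. auto. }
  destruct (Nat.le_gt_cases N K) as [L|L].
  - apply (G 0%nat). rewrite Nat.add_0_r. pose proof (Tseq_mono A H N K L). lra.
  - apply (G (N - K)%nat). replace (K + (N - K))%nat with N by lia. auto.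
Qed.

Lemma Tseq_cseq A : (forall n, 2 <= A n) -> cseq (fun n => / Tseq A n).
Proof.
  intros H. split; [|split].
  - intros j. apply Rinv_0_lt_compat. pose proof (Tseq_2 A H j). lra.
  - intros j. pose proof (Tseq_S A j). pose proof (Tseq_2 A H j).
    apply Rle_trans with (/ (2 * Tseq A j)). apply Rinv_le_contravar; lra.
    right. field. lra.
  - pose proof (Tseq_2 A H 0). apply Rle_trans with (/2). apply Rinv_le_contravar; lra. lra.
Qed.

Lemma RInt_gen_mono (g : R -> R) :
  (forall a b, 1 <= a -> 1 <= b -> ex_RInt g a b) ->
  (forall x y, 1 <= x -> x <= y -> RInt g 1 x <= RInt g 1 y) ->
  (exists B, forall b, 1 <= b -> RInt g 1 b <= B) ->
  ex_RInt_gen g (at_point 1) (Rbar_locally p_infty).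
Proof.
  intros Hex Hmono [B HB].
  set (Es := fun y => exists b, 1 <= b /\ y = RInt g 1 b).
  destruct (completeness Es) as [l [Hub Hlub]].
  { exists B. intros y [b [Hb ->]]. auto. }
  { exists (RInt g 1 1). exists 1. split; [lra|auto]. }
  exists l. intros P [eps Heps].
  destruct (classic (exists b0, 1 <= b0 /\ l - eps < RInt g 1 b0)) as [[b0 [Hb0 Hb0']]|N].
  2:{ exfalso. assert (U : is_upper_bound Es (l - eps)).
      { intros y [b [Hb ->]]. destruct (Rle_dec (RInt g 1 b) (l - eps)) as [L|L]; auto.
        exfalso. apply N. exists b. split; auto. lra. }
      specialize (Hlub _ U). destruct eps; simpl in *; lra. }
  unfold filtermapi.
  apply Filter_prod with (Q := fun a => a = 1) (R := fun b => b0 < b).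
  - reflexivity.
  - exists b0. auto.
  - intros x y Hx Hy. subst x. exists (RInt g 1 y). split.
    + apply (RInt_correct g 1 y). apply Hex; lra.
    + apply Heps. apply ball_R'.
      assert (RInt g 1 y <= l) by (apply Hub; exists y; split; auto; lra).
      assert (RInt g 1 b0 <= RInt g 1 y) by (apply Hmono; lra).
      unfold Rabs. destruct Rcase_abs; destruct eps; simpl in *; lra.
Qed.

Lemma F_upper c w k t : concave_weight w -> cseq c -> 2 <= t -> c (S k) * t <= 1 ->
  Fw c w t <= 2 * G c (Dt w 2) + 2 + INR (S k) * (2 * w t).
Proof.
  intros Hw Hc Ht Hct.
  pose proof (F_diff c w Hw Hc 2 t) as D1.
  pose proof (F_lip c w Hw Hc 0 2 ltac:(lra)) as L. rewrite F0 in L.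
  assert (ex1 : ex_RInt (Dt w) 2 t) by (apply D_ex; auto; lra).
  assert (ex1' : ex_RInt (fun u => INR (S k) * Dt w u) 2 t) by exact (ex_RInt_scal (Dt w) 2 t (INR (S k)) ex1).
  assert (ex2 : ex_RInt (fun _ => 2 * c (S k)) 2 t) by apply ex_RInt_const.
  assert (Hp := RInt_plus (fun u => INR (S k) * Dt w u) (fun _ => 2 * c (S k)) 2 t ex1' ex2).
  change (RInt (fun u => INR (S k) * Dt w u + 2 * c (S k)) 2 t =
          RInt (fun u => INR (S k) * Dt w u) 2 t + RInt (fun _ => 2 * c (S k)) 2 t) in Hp.
  rewrite RInt_const, RInt_scal_R in Hp by auto. change (scal (t - 2) (2 * c (S k))) with ((t - 2) * (2 * c (S k))) in Hp.
  assert (I : RInt (E c w) 2 t <= RInt (fun u => INR (S k) * Dt w u + 2 * c (S k)) 2 t).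
  { apply RInt_le; auto. apply E_ex; auto.
    exact (ex_RInt_plus (fun u => INR (S k) * Dt w u) (fun _ => 2 * c (S k)) 2 t ex1' ex2).
    intros u Hu. unfold E. replace (Rmax u 2) with u by (unfold Rmax; destruct Rle_dec; lra).
    apply G_upper; auto. apply Dt_nonneg; auto; lra. }
  pose proof (intD_upper w Hw t Ht).
  assert (0 < INR (S k)) by (apply lt_0_INR; lia).
  pose proof (proj1 Hc (S k)).
  assert (INR (S k) * RInt (Dt w) 2 t <= INR (S k) * (2 * w t)) by (apply Rmult_le_compat_l; lra).
  nra.
Qed.

Lemma F_lower c w K tau t : concave_weight w -> cseq c -> 2 <= tau -> tau <= t ->
  (forall u, tau <= u -> Dt w u <= c K) ->
  INR (S K) * (RInt (Dt w) 2 t - RInt (Dt w) 2 tau) <= Fw c w t.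
Proof.
  intros Hw Hc Htau Ht HD.
  pose proof (F_diff c w Hw Hc tau t) as D1.
  pose proof (F_inc c w Hw Hc 0 tau ltac:(lra)) as L. rewrite F0 in L.
  assert (ex1 : ex_RInt (Dt w) tau t) by (apply D_ex; auto; lra).
  assert (C := RInt_Chasles (Dt w) 2 tau t ltac:(apply D_ex; auto; lra) ex1).
  change (RInt (Dt w) 2 tau + RInt (Dt w) tau t = RInt (Dt w) 2 t) in C.
  assert (I : RInt (fun u => INR (S K) * Dt w u) tau t <= RInt (E c w) tau t).
  { apply RInt_le; auto. exact (ex_RInt_scal (Dt w) tau t (INR (S K)) ex1). apply E_ex; auto.
    intros u Hu. unfold E. replace (Rmax u 2) with u by (unfold Rmax; destruct Rle_dec; lra).
    apply G_lower; auto. split. apply Dt_nonneg; auto; lra. apply HD; lra. }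
  rewrite RInt_scal_R in I by auto.
  replace (RInt (Dt w) 2 t - RInt (Dt w) 2 tau) with (RInt (Dt w) tau t) by lra. lra.
Qed.

Theorem lemma6p2 (w f : R -> R) :
  concave_weight w -> non_quasianalytic w ->
  (forall t, 0 <= t -> 0 <= f t) ->
  little_o_infty w f ->
  exists w' : R -> R,
    concave_weight w' /\ non_quasianalytic w' /\
    little_o_infty w w' /\ little_o_infty w' f.
Proof.
  intros Hw Hnq Hf Hwf.
  assert (HAex : exists A : nat -> R, forall k, PA w f k (A k)).
  { exists (fun k => proj1_sig (constructive_indefinite_description _ (PA_ex w f Hw Hnq Hwf Hf k))).
    intros k. exact (proj2_sig (constructive_indefinite_description _ _)). }
  destruct HAex as [A HA].
  assert (HA2 : forall n, 2 <= A n) by (intros n; apply (HA n)).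
  set (T := Tseq A). set (c := fun n => / T n).
  assert (Hc : cseq c) by (apply Tseq_cseq; auto).
  assert (HT2 : forall n, 2 <= T n) by (apply Tseq_2; auto).
  assert (P1 : forall k t, T k <= t -> 1 <= w t).
  { intros k t H. pose proof (Tseq_A A k). destruct (HA k) as [_ [Q _]]. apply Q. unfold T in H. lra. }
  assert (P2 : forall k t, T k <= t -> INR (S k) * INR (S k) * w t <= f t).
  { intros k t H. pose proof (Tseq_A A k). destruct (HA k) as [_ [_ [Q _]]]. apply Q. unfold T in H. lra. }
  assert (P3 : forall k x y, T k <= x -> x <= y -> RInt (fun t => w t / t ^ 2) x y <= (/2) ^ k / INR (S k)).
  { intros k x y H H'. pose proof (Tseq_A A k). destruct (HA k) as [_ [_ [_ Q]]]. apply Q; auto. unfold T in H. lra. }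
  set (Emax := G c (Dt w 2)).
  assert (HEm : 0 <= Emax) by (apply G_nonneg; auto).
  set (F := Fw c w).
  assert (Fnn : forall t, 0 <= t -> 0 <= F t).
  { intros t Ht. pose proof (F_inc c w Hw Hc 0 t Ht). rewrite F0 in H. unfold F; lra. }
  assert (Fcont : forall x, continuity_pt F x).
  { intros x. apply cont_eps. intros eps He. exists (eps / (Emax + 1)). split.
    apply Rdiv_lt_0_compat; lra. intros y Hy.
    assert (Hl : Rabs (F y - F x) <= Emax * Rabs (y - x)).
    { destruct (Rle_dec x y) as [L|L].
      - pose proof (F_lip c w Hw Hc x y L). pose proof (F_inc c w Hw Hc x y L).
        unfold F, Emax in *. rewrite (Rabs_pos_eq (y - x)) by lra. rewrite Rabs_pos_eq by lra. lra.
      - pose proof (F_lip c w Hw Hc y x ltac:(lra)). pose proof (F_inc c w Hw Hc y x ltac:(lra)).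
        unfold F, Emax in *. rewrite (Rabs_left (y - x)) by lra. rewrite Rabs_left1 by lra. lra. }
    assert (Emax * Rabs (y - x) <= Emax * (eps / (Emax + 1))) by (apply Rmult_le_compat_l; lra).
    assert (Emax * (eps / (Emax + 1)) < eps).
    { replace (Emax * (eps / (Emax + 1))) with (eps - eps / (Emax + 1)) by (field; lra).
      assert (0 < eps / (Emax + 1)) by (apply Rdiv_lt_0_compat; lra). lra. }
    lra. }
  assert (wF : little_o_infty w F).
  { intros eps He.
    destruct (INR_unbounded (4 / eps)) as [K HK].
    assert (HK' : 4 <= eps * INR (S K)).
    { rewrite S_INR. apply Rmult_lt_compat_l with (r := eps) in HK; auto.
      replace (eps * (4 / eps)) with 4 in HK by (field; lra). lra. }
    destruct (Dt_to0 w Hw (c K) (proj1 Hc K)) as [tau [Htau HD]].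
    set (C := 2 * w 2 + RInt (Dt w) 2 tau).
    destruct (w_big w Hw (4 * C)) as [a Ha].
    exists (Rmax tau a). intros t Ht.
    pose proof (Rmax_l tau a). pose proof (Rmax_r tau a).
    pose proof (F_lower c w K tau t Hw Hc Htau ltac:(lra) HD) as FL.
    pose proof (intD_lower w Hw t ltac:(lra)) as IL.
    specialize (Ha t ltac:(lra)).
    pose proof (w_nonneg w Hw t ltac:(lra)).
    assert (0 < INR (S K)) by (apply lt_0_INR; lia).
    rewrite (Rabs_pos_eq (w t)) by lra. rewrite (Rabs_pos_eq (F t)) by (apply Fnn; lra).
    assert (X : INR (S K) * (w t / 4) <= F t).
    { unfold F. eapply Rle_trans; [|exact FL]. apply Rmult_le_compat_l; [lra|]. unfold C in Ha. lra. }
    nra. }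
  exists F. split; [split; [split; [|split; [|split; [|split; [|split; [|split]]]]]|]|split; [|split]].
  - exact Fnn.
  - intros x _. eapply filterlim_filter_le_1; [apply filter_le_within|].
    apply continuity_pt_filterlim, Fcont.
  - intros s t Hs Hst. pose proof (F_inc c w Hw Hc s t Hst). unfold F; lra.
  - exists 2, 0. intros t Ht.
    assert (A1 : F (2 * t) - F t <= (2 * t - t) * E c w t).
    { unfold F. rewrite F_diff by auto. apply RInt_upper; try lra. apply E_ex; auto.
      intros u Hu; apply E_dec; auto; lra. }
    assert (A2 : (t - 0) * E c w t <= F t - F 0).
    { unfold F. rewrite F_diff by auto. apply RInt_lower; try lra. apply E_ex; auto.
      intros u Hu; apply E_dec; auto; lra. }
    unfold F in A2 at 2. rewrite F0 in A2.
    replace (2 * t - t) with t in A1 by ring. replace (t - 0) with t in A2 by ring.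
    rewrite !Rabs_pos_eq by (apply Fnn; lra). lra.
  - intros eps He.
    destruct (c_small c Hc (eps / 4) ltac:(lra)) as [n Hn].
    assert (Hn' : 2 * c (S n) <= eps / 4) by (pose proof (proj1 (proj2 Hc) n); pose proof (proj1 Hc n); lra).
    assert (0 < INR (S n)) by (apply lt_0_INR; lia).
    destruct (Dt_to0 w Hw (eps / (4 * INR (S n)))) as [tau [Htau HD]].
    { apply Rdiv_lt_0_compat; lra. }
    exists (Rmax tau (2 * F tau / eps)). intros t Ht.
    pose proof (Rmax_l tau (2 * F tau / eps)) as Hm1. pose proof (Rmax_r tau (2 * F tau / eps)) as Hm2.
    assert (A1 : F t - F tau <= (t - tau) * (eps / 2)).
    { unfold F. rewrite F_diff by auto. apply RInt_upper; try lra. apply E_ex; auto.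
      intros u Hu. unfold E. replace (Rmax u 2) with u by (unfold Rmax; destruct Rle_dec; lra).
      eapply Rle_trans. apply G_upper with (k := n); auto. apply Dt_nonneg; auto; lra.
      specialize (HD u ltac:(lra)).
      assert (Hq : INR (S n) * Dt w u <= INR (S n) * (eps / (4 * INR (S n)))) by (apply Rmult_le_compat_l; lra).
      replace (INR (S n) * (eps / (4 * INR (S n)))) with (eps / 4) in Hq by (field; lra). lra. }
    assert (A2 : F tau <= t * (eps / 2)).
    { apply Rmult_le_compat_r with (r := eps / 2) in Hm2; [|lra].
      replace (2 * F tau / eps * (eps / 2)) with (F tau) in Hm2 by (field; lra).
      assert (Rmax tau (2 * F tau / eps) * (eps / 2) <= t * (eps / 2)) by (apply Rmult_le_compat_r; lra).
      lra. }
    pose proof (Fnn tau ltac:(lra)).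
    rewrite Rabs_pos_eq by (apply Fnn; lra). rewrite (Rabs_pos_eq t) by lra.
    assert (0 <= tau * (eps / 2)) by (apply Rmult_le_pos; lra). nra.
  - intros eps He. pose proof Hw as [[_ [_ [_ [_ [_ [Hln _]]]]]] _].
    destruct (Hln eps He) as [M1 HM1]. destruct (wF 1 ltac:(lra)) as [M2 HM2].
    exists (Rmax M1 M2). intros t Ht.
    pose proof (Rmax_l M1 M2). pose proof (Rmax_r M1 M2).
    specialize (HM1 t ltac:(lra)). specialize (HM2 t ltac:(lra)).
    apply Rle_trans with (eps * Rabs (w t)); auto. apply Rmult_le_compat_l; lra.
  - apply F_logconvex; auto.
  - apply F_concave; auto.
  - set (g := fun t => F t / t ^ 2).
    assert (gc : forall t, 0 < t -> continuous g t).
    { intros t Ht. apply continuity_pt_filterlim.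
      apply continuity_pt_ext with (div_fct F (mult_fct (fun u => u) (fun u => u))).
      intros; unfold g, div_fct, mult_fct; simpl; f_equal; ring.
      apply continuity_pt_div. apply Fcont. apply continuity_pt_mult; apply continuity_pt_id.
      unfold mult_fct. nra. }
    assert (gex : forall a b, 0 < a -> 0 < b -> ex_RInt g a b).
    { intros a b Ha Hb. apply (@ex_RInt_continuous R_CompleteNormedModule).
      intros z Hz. apply gc. unfold Rmin in Hz; destruct Rle_dec in Hz; lra. }
    assert (wc : forall t, 0 < t -> continuous (fun t => w t / t ^ 2) t).
    { intros t Ht. apply continuity_pt_filterlim.
      apply continuity_pt_ext with (div_fct w (mult_fct (fun u => u) (fun u => u))).
      intros; unfold div_fct, mult_fct; simpl; f_equal; ring.
      apply continuity_pt_div. apply w_cont; auto. apply continuity_pt_mult; apply continuity_pt_id.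
      unfold mult_fct. nra. }
    assert (wex : forall a b, 0 < a -> 0 < b -> ex_RInt (fun t => w t / t ^ 2) a b).
    { intros a b Ha Hb. apply (@ex_RInt_continuous R_CompleteNormedModule).
      intros z Hz. apply wc. unfold Rmin in Hz; destruct Rle_dec in Hz; lra. }
    assert (gnn : forall t, 0 < t -> 0 <= g t).
    { intros t Ht. unfold g. apply Rmult_le_pos. apply Fnn; lra.
      apply Rlt_le, Rinv_0_lt_compat. apply pow_lt; lra. }
    assert (gchas : forall a b c, 0 < a -> 0 < b -> 0 < c -> RInt g a b + RInt g b c = RInt g a c).
    { intros a b c0 Ha Hb Hc0. exact (RInt_Chasles g a b c0 (gex a b Ha Hb) (gex b c0 Hb Hc0)). }
    assert (gpos : forall a b, 0 < a -> a <= b -> 0 <= RInt g a b).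
    { intros a b Ha Hab. eapply Rle_trans; [|apply RInt_lower with (M := 0)]. lra. auto. apply gex; lra.
      intros; apply gnn; lra. }
    set (S0 := 2 * Emax + 4).
    assert (blk : forall k, RInt g (T k) (T (S k)) <= S0 * (/2) ^ k).
    { intros k. set (Ck := 2 * Emax + 2 + 2 * INR (S k)).
      assert (Hk1 : 1 <= INR (S k)) by (rewrite S_INR; pose proof (pos_INR k); lra).
      assert (HTk : T k <= T (S k)) by (pose proof (Tseq_S A k); pose proof (HT2 k); unfold T in *; lra).
      assert (ex1 : ex_RInt (fun t => w t / t ^ 2) (T k) (T (S k))) by (apply wex; pose proof (HT2 k); pose proof (HT2 (S k)); lra).
      assert (I1 : RInt g (T k) (T (S k)) <= RInt (fun t => Ck * (w t / t ^ 2)) (T k) (T (S k))).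
      { apply RInt_le; auto. apply gex; pose proof (HT2 k); pose proof (HT2 (S k)); lra.
        exact (ex_RInt_scal _ _ _ Ck ex1).
        intros t Ht. unfold g.
        pose proof (HT2 k).
        assert (Fu : F t <= 2 * Emax + 2 + INR (S k) * (2 * w t)).
        { unfold F, Emax. apply F_upper; auto. lra.
          unfold c. apply Rmult_le_reg_l with (T (S k)). lra.
          rewrite <- Rmult_assoc, Rinv_r, Rmult_1_l, Rmult_1_r by lra. lra. }
        pose proof (P1 k t ltac:(lra)).
        assert (F t <= Ck * w t) by (unfold Ck; nra).
        unfold Rdiv. rewrite <- Rmult_assoc. apply Rmult_le_compat_r.
        apply Rlt_le, Rinv_0_lt_compat. apply pow_lt; lra. auto. }
      rewrite RInt_scal_R in I1 by auto.
      pose proof (P3 k (T k) (T (S k)) (Rle_refl _) HTk) as I2.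
      assert (0 < Ck) by (unfold Ck; lra).
      assert (I3 : Ck * RInt (fun t => w t / t ^ 2) (T k) (T (S k)) <= Ck * ((/2) ^ k / INR (S k)))
        by (apply Rmult_le_compat_l; lra).
      assert (I4 : Ck * ((/2) ^ k / INR (S k)) <= S0 * (/2) ^ k).
      { assert (0 < (/2) ^ k) by (apply pow_lt; lra).
        replace (Ck * ((/2) ^ k / INR (S k))) with ((Ck / INR (S k)) * (/2) ^ k) by (field; lra).
        apply Rmult_le_compat_r; [lra|]. unfold Ck, S0.
        replace ((2 * Emax + 2 + 2 * INR (S k)) / INR (S k)) with ((2 * Emax + 2) / INR (S k) + 2) by (field; lra).
        assert ((2 * Emax + 2) / INR (S k) <= 2 * Emax + 2).
        { apply Rmult_le_reg_r with (INR (S k)). lra. unfold Rdiv.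
          rewrite Rmult_assoc, Rinv_l by lra. nra. }
        lra. }
      lra. }
    assert (sum : forall n, RInt g (T 0%nat) (T n) <= S0 * (2 - 2 * (/2) ^ n)).
    { induction n.
      - simpl. rewrite RInt_point. unfold zero; simpl. lra.
      - rewrite <- (gchas (T 0%nat) (T n) (T (S n))) by (pose proof (HT2 0%nat); pose proof (HT2 n); pose proof (HT2 (S n)); lra).
        specialize (blk n). simpl pow. lra. }
    change (ex_RInt_gen g (at_point 1) (Rbar_locally p_infty)).
    apply RInt_gen_mono.
    + intros a b Ha Hb; apply gex; lra.
    + intros x y Hx Hxy. rewrite <- (gchas 1 x y) by lra. pose proof (gpos x y ltac:(lra) Hxy). lra.
    + exists (RInt g 1 (T 0%nat) + 2 * S0). intros b Hb.
      assert (HS0 : 0 <= S0) by (unfold S0; lra).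
      pose proof (HT2 0%nat).
      destruct (Rle_dec b (T 0%nat)) as [L|L].
      * rewrite <- (gchas 1 b (T 0%nat)) by lra. pose proof (gpos b (T 0%nat) ltac:(lra) L). lra.
      * destruct (Tseq_unb A HA2 b) as [n Hn]. fold T in Hn.
        pose proof (HT2 n).
        pose proof (gchas 1 b (T n) ltac:(lra) ltac:(lra) ltac:(lra)). pose proof (gpos b (T n) ltac:(lra) Hn).
        pose proof (gchas 1 (T 0%nat) (T n) ltac:(lra) ltac:(lra) ltac:(lra)).
        specialize (sum n). assert (0 <= (/2) ^ n) by (apply pow_le; lra).
        assert (S0 * (2 - 2 * (/2) ^ n) <= 2 * S0) by nra. lra.
  - exact wF.
  - intros eps He.
    destruct (INR_unbounded (4 / eps)) as [K HK].
    assert (HK' : 4 <= eps * INR (S K)).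
    { rewrite S_INR. apply Rmult_lt_compat_l with (r := eps) in HK; auto.
      replace (eps * (4 / eps)) with 4 in HK by (field; lra). lra. }
    destruct (w_big w Hw (2 * (2 * Emax + 2) / eps)) as [a Ha].
    exists (Rmax (T K) a). intros t Ht.
    pose proof (Rmax_l (T K) a). pose proof (Rmax_r (T K) a). pose proof (HT2 K).
    destruct (Tseq_block A HA2 K t ltac:(fold T; lra)) as [k [Hk [Ht1 Ht2]]]. fold T in Ht1, Ht2.
    assert (Fu : F t <= 2 * Emax + 2 + INR (S k) * (2 * w t)).
    { unfold F, Emax. apply F_upper; auto. lra. pose proof (HT2 (S k)).
      unfold c. apply Rmult_le_reg_l with (T (S k)). lra.
      rewrite <- Rmult_assoc, Rinv_r, Rmult_1_l, Rmult_1_r by lra. lra. }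
    pose proof (P2 k t Ht1) as Pk.
    assert (T 0%nat <= t) by (pose proof (Tseq_mono A HA2 0 K ltac:(lia)) as Hm; change (T 0%nat <= T K) in Hm; lra).
    pose proof (P2 0%nat t ltac:(lra)) as P0. simpl INR in P0.
    specialize (Ha t ltac:(lra)).
    pose proof (w_nonneg w Hw t ltac:(lra)).
    assert (HkK : INR (S K) <= INR (S k)) by (apply le_INR; lia).
    assert (0 < INR (S K)) by (apply lt_0_INR; lia).
    set (s := INR (S k)) in *.
    assert (X1 : 2 * Emax + 2 <= eps / 2 * w t).
    { apply Rmult_le_compat_r with (r := eps / 2) in Ha; [|lra].
      replace (2 * (2 * Emax + 2) / eps * (eps / 2)) with (2 * Emax + 2) in Ha by (field; lra). lra. }
    assert (X2 : s * (2 * w t) <= eps / 2 * f t).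
    { assert (4 <= eps * s) by nra.
      assert (eps / 2 * (s * s * w t) <= eps / 2 * f t) by (apply Rmult_le_compat_l; lra).
      assert (s * (2 * w t) <= eps / 2 * (s * s * w t)).
      { replace (eps / 2 * (s * s * w t)) with ((eps * s) / 4 * (s * (2 * w t))) by field.
        assert (0 <= s * (2 * w t)) by nra.
        assert (1 <= eps * s / 4) by lra. nra. }
      lra. }
    rewrite Rabs_pos_eq by (apply Fnn; lra). rewrite (Rabs_pos_eq (f t)) by (apply Hf; lra).
    nra.
Qed.
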